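(* For all $\alpha,\beta\in K\otimes\mathbb{C}$, $$\langle\alpha,\beta_0\rangle=\mathrm{rk}(\alpha)\deg(\beta)-\mathrm{rk}(\beta)\deg(\alpha)+\mathrm{rk}(\alpha)\mathrm{rk}(\beta)$$ and $$\langle\beta_0,\alpha\rangle=\mathrm{rk}(\beta)\deg(\alpha)-\mathrm{rk}(\alpha)\deg(\beta)+\mathrm{rk}(\alpha)\mathrm{rk}(\beta)\Big(\frac1{n-2}-1\Big).$$
   Context: Fix an integer $n\ge3$; $a_1=n-2$, $a_2=a_3=2$; $X=\mathbb{P}^1_{n-2,2,2}$ is the orbifold projective line with orbifold points of orders $n-2,2,2$. Its $K$-ring is $K=\mathbb{Z}[L_1,L_2,L_3]/\langle L_i^{a_i}-L_j^{a_j},(L_i-1)(L_j-1):i\neq j\rangle$, $L:=L_1^{n-2}$. $\mathrm{rk}:K\to\mathbb{Z}$ is the ring map $L_i\mapsto1$; $\deg:K\to\mathbb{Q}$ is additive with $\deg(1)=0$, $\deg(L_i)=1/a_i$, $\deg(EF)=\mathrm{rk}(E)\deg(F)+\mathrm{rk}(F)\deg(E)$; both extended linearly to $K\otimes\mathbb{C}$. $\langle a,b\rangle=\chi(a^\vee\otimes b)$ is the Euler pairing, extended bilinearly; equivalently $\langle a,b\rangle=\frac1{2\pi}(\Psi(a),e^{\pi\mathbf{i}\theta}e^{\pi\mathbf{i}\rho}\Psi(b))$, where $H$ has basis $\phi_{0,0}=1,\phi_{0,1}=P,\phi_{i,p}$ ($1\le i\le3$, $1\le p\le a_i-1$, twisted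 sectors), pairing $(\phi_{0,0},\phi_{0,1})=1$, $(\phi_{i,p},\phi_{i,a_i-p})=1/a_i$ and zero otherwise, $\theta(\phi_{0,0})=\frac12\phi_{0,0}$, $\theta(\phi_{0,1})=-\frac12\phi_{0,1}$, $\theta(\phi_{i,p})=(\frac12-\frac p{a_i})\phi_{i,p}$, $\rho\phi_{0,0}=\frac1{n-2}\phi_{0,1}$ and $\rho$ kills other basis vectors, and $\Psi(E)=\mathrm{rk}(E)(1-\frac{\gamma}{n-2}P)+2\pi\mathbf{i}\deg(E)P+\sum_{j,p}\Gamma(1-\frac p{a_j})\chi_{j,p}(E)\phi_{j,p}$ with $\gamma=-\Gamma'(1)+(n-2)\log Q$, $Q\in\mathbb{C}^*$, and $\chi_{j,p}$ the ring maps with $\chi_{j,p}(L_i)=e^{-2\pi\mathbf{i}p\delta_{j,i}/a_j}$. $\sigma:K\to K$ is multiplication by the tangent bundle class $T=L_1+L_2+L_3-L-1$. Put $\kappa=2(n-2)$ and for $\beta\in K\otimes\mathbb{C}$, $\beta_0=\frac1\kappa(\beta+\sigma(\beta)+\dots+\sigma^{\kappa-1}(\beta))$. *)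

(* Defs.v *)
From Stdlib Require Import Reals List.
From Coquelicot Require Import Coquelicot.
Import ListNotations.
Open Scope R_scope.

Definition Cexp (z : C) : C :=
  (exp (Re z) * cos (Im z), exp (Re z) * sin (Im z)).

Fixpoint Cpow (z : C) (k : nat) : C :=
  match k with O => RtoC 1 | S k' => Cmult z (Cpow z k') end.

Definition Csum {A : Type} (f : A -> C) (l : list A) : C :=
  fold_right (fun x acc => Cplus (f x) acc) (RtoC 0) l.

Definition aw (n j : nat) : nat := if Nat.eqb j 1 then (n - 2)%nat else 2%nat.

(* ---------- K (x) C ----------
   An element of K (x) C = C[L1,L2,L3]/<relations> is represented by a
   C-linear combination of monomials L1^k1 L2^k2 L3^k3 (a lift to the
   polynomial ring, which surjects onto K (x) C since the L_i are units
   of K).  All maps below are defined on lifts and are well defined on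
   the quotient. *)
Definition KC := list (C * (nat * nat * nat)).

Definition Kmul (p q : KC) : KC :=
  flat_map (fun '(c, (k1, k2, k3)) =>
    map (fun '(d, (l1, l2, l3)) =>
      (Cmult c d, ((k1 + l1)%nat, (k2 + l2)%nat, (k3 + l3)%nat))) q) p.

Definition Kscale (s : C) (p : KC) : KC :=
  map (fun '(c, m) => (Cmult s c, m)) p.

Definition Keval (z1 z2 z3 : C) (p : KC) : C :=
  Csum (fun '(c, (k1, k2, k3)) =>
    Cmult c (Cmult (Cpow z1 k1) (Cmult (Cpow z2 k2) (Cpow z3 k3)))) p.

Definition rk (p : KC) : C := Keval (RtoC 1) (RtoC 1) (RtoC 1) p.

(* deg : additive, deg 1 = 0, deg L_i = 1/a_i, Leibniz rule; hence on a
   monomial deg(L1^k1 L2^k2 L3^k3) = k1/a1 + k2/a2 + k3/a3. *)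
Definition degK (n : nat) (p : KC) : C :=
  Csum (fun '(c, (k1, k2, k3)) =>
    Cmult c (RtoC (INR k1 / INR (aw n 1) + INR k2 / INR (aw n 2)
                   + INR k3 / INR (aw n 3)))) p.

Definition zeta (n j p : nat) : C :=
  Cexp (Cmult Ci (RtoC (- 2 * PI * INR p / INR (aw n j)))).
Definition chi (n j p : nat) (x : KC) : C :=
  Keval (if Nat.eqb j 1 then zeta n j p else RtoC 1)
        (if Nat.eqb j 2 then zeta n j p else RtoC 1)
        (if Nat.eqb j 3 then zeta n j p else RtoC 1) x.

Definition Tcl (n : nat) : KC :=
  [ (RtoC 1, (1%nat, 0%nat, 0%nat)); (RtoC 1, (0%nat, 1%nat, 0%nat));
    (RtoC 1, (0%nat, 0%nat, 1%nat)); (RtoC (-1), ((n - 2)%nat, 0%nat, 0%nat));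
    (RtoC (-1), (0%nat, 0%nat, 0%nat)) ].

Definition sigma (n : nat) (b : KC) : KC := Kmul (Tcl n) b.

Definition kappa (n : nat) : nat := (2 * (n - 2))%nat.

Definition beta0 (n : nat) (b : KC) : KC :=
  Kscale (RtoC (/ INR (kappa n)))
    (flat_map (fun k => Nat.iter k (sigma n) b) (seq 0 (kappa n))).

Definition Gamma (x : R) : R :=
  RInt_gen (fun t => Rpower t (x - 1) * exp (- t))
           (at_right 0) (Rbar_locally p_infty).

(* gamma = -Gamma'(1) + (n-2) log Q, with lq a chosen logarithm of Q *)
Definition gam (n : nat) (lq : C) : C :=
  Cplus (RtoC (- Derive Gamma 1)) (Cmult (RtoC (INR (n - 2))) lq).

(* basis: phi_{0,0}=1, phi_{0,1}=P, twisted phi_{j,p}, 1<=j<=3, 1<=p<=a_j-1 *)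
Inductive Hidx := H00 | H01 | Htw (j p : nat).
Definition Hvec := Hidx -> C.

Definition twisted (n : nat) : list (nat * nat) :=
  flat_map (fun j => map (fun p => (j, p)) (seq 1 (aw n j - 1))) [1%nat; 2%nat; 3%nat].

Definition Hpair (n : nat) (u v : Hvec) : C :=
  Cplus (Cplus (Cmult (u H00) (v H01)) (Cmult (u H01) (v H00)))
    (Csum (fun '(j, p) =>
       Cmult (RtoC (/ INR (aw n j)))
             (Cmult (u (Htw j p)) (v (Htw j (aw n j - p)%nat)))) (twisted n)).

(* e^{pi i theta}: theta is diagonal in the basis *)
Definition theta_eig (n : nat) (i : Hidx) : R :=
  match i with
  | H00 => 1 / 2
  | H01 => - (1 / 2)
  | Htw j p => 1 / 2 - INR p / INR (aw n j)
  end.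
Definition exp_pi_i_theta (n : nat) (v : Hvec) : Hvec :=
  fun i => Cmult (Cexp (Cmult Ci (RtoC (PI * theta_eig n i)))) (v i).

(* e^{pi i rho} = 1 + pi i rho since rho^2 = 0;
   rho phi_{0,0} = (1/(n-2)) phi_{0,1}, rho kills the other basis vectors *)
Definition exp_pi_i_rho (n : nat) (v : Hvec) : Hvec :=
  fun i => match i with
  | H01 => Cplus (v H01) (Cmult (Cmult Ci (RtoC (PI / INR (n - 2)))) (v H00))
  | _ => v i
  end.

Definition Psi (n : nat) (lq : C) (E : KC) : Hvec :=
  fun i => match i with
  | H00 => rk E
  | H01 => Cplus (Copp (Cmult (rk E) (Cdiv (gam n lq) (RtoC (INR (n - 2))))))
                 (Cmult (Cmult (RtoC (2 * PI)) Ci) (degK n E))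
  | Htw j p => Cmult (RtoC (Gamma (1 - INR p / INR (aw n j)))) (chi n j p E)
  end.

Definition euler (n : nat) (lq : C) (a b : KC) : C :=
  Cmult (RtoC (/ (2 * PI)))
    (Hpair n (Psi n lq a) (exp_pi_i_theta n (exp_pi_i_rho n (Psi n lq b)))).

(* Main.v *)
Require Import Defs.
From Stdlib Require Import Reals List.
From Coquelicot Require Import Coquelicot.
Open Scope R_scope.
From Stdlib Require Import Lia Lra.
Import ListNotations.
Opaque aw.
Open Scope C_scope.

Lemma Csum_app {A} (f : A -> C) l1 l2 : Csum f (l1 ++ l2) = Csum f l1 + Csum f l2.
Proof. induction l1; simpl. ring. rewrite IHl1; ring. Qed.

Lemma Csum_ext {A} (f g : A -> C) l : (forall x, In x l -> f x = g x) -> Csum f l = Csum g l.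
Proof. induction l; simpl; intros H; auto. rewrite H, IHl; auto. Qed.

Lemma Csum_zero {A} (f : A -> C) l : (forall x, In x l -> f x = 0) -> Csum f l = 0.
Proof. induction l; simpl; intros H; auto. rewrite H, IHl; auto. ring. Qed.

Lemma Csum_scal {A} (f : A -> C) c l : Csum (fun x => c * f x) l = c * Csum f l.
Proof. induction l; simpl. ring. rewrite IHl; ring. Qed.

Lemma Csum_plus {A} (f g : A -> C) l : Csum (fun x => f x + g x) l = Csum f l + Csum g l.
Proof. induction l; simpl. ring. rewrite IHl; ring. Qed.

Lemma DCpow_add z a b : Defs.Cpow z (a + b) = Defs.Cpow z a * Defs.Cpow z b.
Proof. induction a; simpl. ring. rewrite IHa; ring. Qed.

Lemma DCpow_1 k : Defs.Cpow 1 k = 1.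
Proof. induction k; simpl; auto. rewrite IHk; ring. Qed.

Definition mon z1 z2 z3 k1 k2 k3 := Defs.Cpow z1 k1 * (Defs.Cpow z2 k2 * Defs.Cpow z3 k3).

Lemma Keval_app z1 z2 z3 p q : Keval z1 z2 z3 (p ++ q) = Keval z1 z2 z3 p + Keval z1 z2 z3 q.
Proof. unfold Keval; apply Csum_app. Qed.

Lemma Keval_flat_map {A} z1 z2 z3 (g : A -> KC) l :
  Keval z1 z2 z3 (flat_map g l) = Csum (fun x => Keval z1 z2 z3 (g x)) l.
Proof. induction l; simpl; auto. rewrite Keval_app, IHl; auto. Qed.

Lemma Keval_scale z1 z2 z3 s p : Keval z1 z2 z3 (Kscale s p) = s * Keval z1 z2 z3 p.
Proof.
  induction p as [|[c [[k1 k2] k3]] p IH]; simpl. unfold Keval; simpl; ring.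
  unfold Keval in *; simpl. rewrite IH; ring.
Qed.

Lemma Keval_map z1 z2 z3 c k1 k2 k3 q :
  Keval z1 z2 z3 (map (fun '(d, (l1, l2, l3)) =>
      (Cmult c d, ((k1 + l1)%nat, (k2 + l2)%nat, (k3 + l3)%nat))) q)
  = c * mon z1 z2 z3 k1 k2 k3 * Keval z1 z2 z3 q.
Proof.
  induction q as [|[d [[l1 l2] l3]] q IH]; unfold Keval in *; simpl. ring.
  rewrite IH, !DCpow_add; unfold mon; ring.
Qed.

Lemma Keval_mul z1 z2 z3 p q : Keval z1 z2 z3 (Kmul p q) = Keval z1 z2 z3 p * Keval z1 z2 z3 q.
Proof.
  unfold Kmul; rewrite Keval_flat_map.
  induction p as [|[c [[k1 k2] k3]] p IH]; simpl. unfold Keval; simpl; ring.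
  rewrite Keval_map, IH. unfold Keval, mon; simpl; ring.
Qed.

Definition mdeg n k1 k2 k3 : R := INR k1 / INR (aw n 1) + INR k2 / INR (aw n 2) + INR k3 / INR (aw n 3).

Lemma degK_app n p q : degK n (p ++ q) = degK n p + degK n q.
Proof. unfold degK; apply Csum_app. Qed.

Lemma degK_flat_map {A} n (g : A -> KC) l :
  degK n (flat_map g l) = Csum (fun x => degK n (g x)) l.
Proof. induction l; simpl; auto. rewrite degK_app, IHl; auto. Qed.

Lemma degK_scale n s p : degK n (Kscale s p) = s * degK n p.
Proof.
  induction p as [|[c [[k1 k2] k3]] p IH]; simpl. unfold degK; simpl; ring.
  unfold degK in *; simpl in IH |- *. rewrite IH; ring.
Qed.

Lemma degK_map n c k1 k2 k3 q :
  degK n (map (fun '(d, (l1, l2, l3)) =>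
      (Cmult c d, ((k1 + l1)%nat, (k2 + l2)%nat, (k3 + l3)%nat))) q)
  = c * RtoC (mdeg n k1 k2 k3) * rk q + c * degK n q.
Proof.
  induction q as [|[d [[l1 l2] l3]] q IH]; unfold degK, rk, Keval in *; simpl. ring.
  rewrite IH, !DCpow_1, !plus_INR. unfold mdeg.
  replace (RtoC ((INR k1 + INR l1) / INR (aw n 1) + (INR k2 + INR l2) / INR (aw n 2) +
     (INR k3 + INR l3) / INR (aw n 3)))
  with (RtoC (INR k1 / INR (aw n 1) + INR k2 / INR (aw n 2) + INR k3 / INR (aw n 3)) +
        RtoC (INR l1 / INR (aw n 1) + INR l2 / INR (aw n 2) + INR l3 / INR (aw n 3))).
  ring.
  rewrite <- RtoC_plus. f_equal. unfold Rdiv; ring.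
Qed.

Lemma degK_mul n p q : degK n (Kmul p q) = degK n p * rk q + rk p * degK n q.
Proof.
  unfold Kmul; rewrite degK_flat_map.
  induction p as [|[c [[k1 k2] k3]] p IH]; simpl. unfold degK, rk, Keval; simpl; ring.
  rewrite degK_map, IH. unfold degK, rk, Keval, mdeg; simpl. rewrite !DCpow_1. ring.
Qed.

Lemma aw1 n : aw n 1 = (n - 2)%nat. Proof. reflexivity. Qed.
Lemma aw2 n : aw n 2 = 2%nat. Proof. reflexivity. Qed.
Lemma aw3 n : aw n 3 = 2%nat. Proof. reflexivity. Qed.

Lemma Keval_T n z1 z2 z3 : Keval z1 z2 z3 (Tcl n) = z1 + z2 + z3 - Defs.Cpow z1 (n - 2) - 1.
Proof. unfold Keval, Tcl; simpl. ring. Qed.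

Lemma rk_T n : rk (Tcl n) = 1.
Proof. unfold rk; rewrite Keval_T, DCpow_1. ring. Qed.

Lemma degK_T n : (3 <= n)%nat -> degK n (Tcl n) = RtoC (1 / INR (n - 2)).
Proof.
  intros H. assert (INR (n-2) <> 0)%R by (apply not_0_INR; lia).
  unfold degK, Tcl; simpl. rewrite aw1, aw2, aw3. simpl.
  rewrite <- !RtoC_mult, <- !RtoC_plus. f_equal. field. auto.
Qed.

Lemma iter_S {A} (f : A -> A) k x : Nat.iter (S k) f x = f (Nat.iter k f x).
Proof. reflexivity. Qed.
Lemma iter_0 {A} (f : A -> A) x : Nat.iter 0 f x = x.
Proof. reflexivity. Qed.

Lemma DCpow_S w k : Defs.Cpow w (S k) = w * Defs.Cpow w k.
Proof. reflexivity. Qed.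

Lemma Keval_iter n z1 z2 z3 k b :
  Keval z1 z2 z3 (Nat.iter k (Defs.sigma n) b) = Defs.Cpow (Keval z1 z2 z3 (Tcl n)) k * Keval z1 z2 z3 b.
Proof.
  induction k. rewrite iter_0; simpl; ring. rewrite iter_S, DCpow_S. unfold Defs.sigma at 1. rewrite Keval_mul, IHk. ring.
Qed.

Lemma rk_iter n k b : rk (Nat.iter k (Defs.sigma n) b) = rk b.
Proof. unfold rk. rewrite Keval_iter. fold (rk (Tcl n)). rewrite rk_T, DCpow_1. ring. Qed.

Lemma degK_iter n k b : (3 <= n)%nat ->
  degK n (Nat.iter k (Defs.sigma n) b) = degK n b + RtoC (INR k / INR (n - 2)) * rk b.
Proof.
  intros H. assert (INR (n-2) <> 0)%R by (apply not_0_INR; lia).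
  induction k. rewrite iter_0.
  - simpl INR. replace (RtoC (0 / INR (n-2))) with (RtoC 0). ring. f_equal. field; auto.
  - rewrite iter_S. unfold Defs.sigma at 1. rewrite degK_mul, IHk, rk_T, degK_T, rk_iter by auto.
    rewrite S_INR. replace (RtoC ((INR k + 1) / INR (n - 2))) with
      (RtoC (INR k / INR (n - 2)) + RtoC (1 / INR (n-2))). ring.
    rewrite <- RtoC_plus. f_equal. field; auto.
Qed.

Lemma Csum_const {A} (c : C) (l : list A) : Csum (fun _ => c) l = RtoC (INR (length l)) * c.
Proof. induction l; simpl length. simpl. ring. rewrite S_INR, RtoC_plus. simpl. rewrite IHl. ring. Qed.

Lemma Csum_id m : Csum (fun k => RtoC (INR k)) (seq 0 m) = RtoC (INR m * (INR m - 1) / 2).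
Proof.
  induction m. simpl. f_equal. field.
  rewrite seq_S, Csum_app, IHm, S_INR. simpl. apply injective_projections; simpl; field.
Qed.

Lemma Csum_geom w m : (w - 1) * Csum (fun k => Defs.Cpow w k) (seq 0 m) = Defs.Cpow w m - 1.
Proof.
  induction m. simpl. ring.
  rewrite seq_S, Csum_app, Cmult_plus_distr_l, IHm. simpl. ring.
Qed.

Lemma kappa_pos n : (3 <= n)%nat -> INR (kappa n) <> 0%R.
Proof. intros; apply not_0_INR; unfold kappa; lia. Qed.

Lemma Keval_beta0 n z1 z2 z3 b :
  Keval z1 z2 z3 (beta0 n b) = RtoC (/ INR (kappa n)) *
    Csum (fun k => Defs.Cpow (Keval z1 z2 z3 (Tcl n)) k) (seq 0 (kappa n)) * Keval z1 z2 z3 b.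
Proof.
  unfold beta0. rewrite Keval_scale, Keval_flat_map.
  rewrite (Csum_ext _ (fun k => Keval z1 z2 z3 b * Defs.Cpow (Keval z1 z2 z3 (Tcl n)) k)).
  rewrite Csum_scal, (Cmult_comm (Keval z1 z2 z3 b)). apply Cmult_assoc.
  intros; rewrite Keval_iter; ring.
Qed.

Lemma rk_beta0 n b : (3 <= n)%nat -> rk (beta0 n b) = rk b.
Proof.
  intros H. unfold rk. rewrite Keval_beta0. fold (rk (Tcl n)). rewrite rk_T.
  rewrite (Csum_ext _ (fun _ => 1)) by (intros; apply DCpow_1).
  rewrite Csum_const, length_seq.
  rewrite Cmult_1_r, <- RtoC_mult, Rinv_l by (apply kappa_pos; auto).
  fold (rk b). ring.
Qed.

Lemma degK_beta0 n b : (3 <= n)%nat ->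
  degK n (beta0 n b) = degK n b + RtoC ((2 * INR (n - 2) - 1) / (2 * INR (n - 2))) * rk b.
Proof.
  intros H. assert (INR (n-2) <> 0)%R by (apply not_0_INR; lia).
  unfold beta0. rewrite degK_scale, degK_flat_map.
  rewrite (Csum_ext _ (fun k => degK n b + RtoC (/ INR (n-2)) * rk b * RtoC (INR k))).
  2:{ intros; rewrite degK_iter by auto. apply injective_projections; simpl; field; auto. }
  rewrite Csum_plus, Csum_const, Csum_scal, Csum_id, length_seq.
  unfold kappa. rewrite mult_INR. simpl (INR 2).
  apply injective_projections; simpl; field; auto.
Qed.

Lemma Cexp_i x : Cexp (Cmult Ci (RtoC x)) = (cos x, sin x).
Proof.
  unfold Cexp. simpl. replace (0 * x - 1 * 0)%R with 0%R by ring.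
  replace (0 * 0 + 1 * x)%R with x by ring. rewrite exp_0. f_equal; ring.
Qed.

Lemma Cpow_cis x k : Defs.Cpow (cos x, sin x) k = (cos (INR k * x), sin (INR k * x)).
Proof.
  induction k. simpl. rewrite Rmult_0_l, cos_0, sin_0. reflexivity.
  rewrite DCpow_S, IHk, S_INR. replace ((INR k + 1) * x)%R with (x + INR k * x)%R by ring.
  rewrite cos_plus, sin_plus. apply injective_projections; simpl; ring.
Qed.

Definition cisq (a q : nat) : C := (cos (-2 * PI * INR q / INR a), sin (-2 * PI * INR q / INR a)).

Lemma cisq_pow a q m : (1 <= a)%nat -> Defs.Cpow (cisq a q) (m * a) = 1.
Proof.
  intros Ha. assert (INR a <> 0)%R by (apply not_0_INR; lia).
  unfold cisq. rewrite Cpow_cis.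
  replace (INR (m * a) * (-2 * PI * INR q / INR a))%R with (- (0 + 2 * INR (m * q) * PI))%R.
  rewrite cos_neg, sin_neg, cos_period, sin_period, cos_0, sin_0.
  apply injective_projections; simpl; ring.
  rewrite !mult_INR. field. auto.
Qed.

Lemma cisq_ne1 a q : (0 < q < a)%nat -> cisq a q <> 1.
Proof.
  intros Hq E. assert (Ha : (0 < INR a)%R) by (apply lt_0_INR; lia).
  assert (Hq' : (0 < INR q)%R) by (apply lt_0_INR; lia).
  assert (Hqa : (INR q < INR a)%R) by (apply lt_INR; lia).
  apply (f_equal fst) in E. unfold cisq in E; simpl in E.
  replace (-2 * PI * INR q / INR a)%R with (- (2 * (PI * INR q / INR a)))%R in E by (field; lra).
  rewrite cos_neg, cos_2a_sin in E.
  assert (0 < sin (PI * INR q / INR a))%R.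
  { apply sin_gt_0. apply Rdiv_lt_0_compat; try apply Rmult_lt_0_compat; auto. apply PI_RGT_0.
    apply (Rmult_lt_reg_r (INR a)); auto. unfold Rdiv. rewrite Rmult_assoc, Rinv_l by lra.
    pose proof PI_RGT_0. nra. }
  nra.
Qed.

Lemma geom_zero w m : Defs.Cpow w m = 1 -> w <> 1 -> Csum (fun k => Defs.Cpow w k) (seq 0 m) = 0.
Proof.
  intros H1 H2. pose proof (Csum_geom w m) as G. rewrite H1 in G.
  assert (w - 1 <> 0). { intro E. apply H2. replace w with ((w - 1) + 1) by ring. rewrite E. ring. }
  replace (Csum (fun k => Defs.Cpow w k) (seq 0 m)) with (/ (w - 1) * ((w - 1) * Csum (fun k => Defs.Cpow w k) (seq 0 m))).
  rewrite G. ring. field. auto.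
Qed.

Lemma zeta_cisq n j q : zeta n j q = cisq (aw n j) q.
Proof. unfold zeta. rewrite Cexp_i. reflexivity. Qed.

Lemma chi_beta0 n j q b : (3 <= n)%nat -> (j = 1 \/ j = 2 \/ j = 3)%nat ->
  (1 <= q < aw n j)%nat -> chi n j q (beta0 n b) = 0.
Proof.
  intros Hn Hj Hq. unfold chi. rewrite Keval_beta0.
  assert (HT : Keval (if Nat.eqb j 1 then zeta n j q else 1) (if Nat.eqb j 2 then zeta n j q else 1)
      (if Nat.eqb j 3 then zeta n j q else 1) (Tcl n) = zeta n j q).
  { rewrite Keval_T, zeta_cisq.
    destruct Hj as [ -> | [ -> | -> ] ]; cbn [Nat.eqb].
    - rewrite aw1 in *. assert (E := cisq_pow (n - 2) q 1). rewrite Nat.mul_1_l in E. rewrite E by lia. ring.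
    - rewrite DCpow_1. ring.
    - rewrite DCpow_1. ring. }
  rewrite HT, zeta_cisq, geom_zero. ring.
  - unfold kappa. destruct Hj as [ -> | [ -> | -> ] ].
    + rewrite aw1. apply cisq_pow. lia.
    + rewrite aw2, Nat.mul_comm. apply cisq_pow. lia.
    + rewrite aw3, Nat.mul_comm. apply cisq_pow. lia.
  - apply cisq_ne1. lia.
Qed.

Close Scope C_scope.
Open Scope R_scope.

Lemma twisted_in n j p : (3 <= n)%nat -> In (j, p) (twisted n) ->
  (j = 1 \/ j = 2 \/ j = 3)%nat /\ (1 <= p < aw n j)%nat.
Proof.
  intros Hn H. unfold twisted in H. apply in_flat_map in H as [j' [Hj' Hp]].
  apply in_map_iff in Hp as [p' [E Hp']]. inversion E; subst.
  apply in_seq in Hp'. simpl in Hj'. split; [|lia]. intuition.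
Qed.

Lemma pi_half : (cos (PI * (1 / 2)), sin (PI * (1 / 2))) = Ci.
Proof. replace (PI * (1/2))%R with (PI/2)%R by field. rewrite cos_PI2, sin_PI2. reflexivity. Qed.
Lemma pi_mhalf : (cos (PI * - (1 / 2)), sin (PI * - (1 / 2))) = Copp Ci.
Proof. replace (PI * - (1/2))%R with (- (PI/2))%R by field. rewrite cos_neg, sin_neg, cos_PI2, sin_PI2.
  apply injective_projections; simpl; ring. Qed.

Theorem lemma7 (n : nat) (hn : (3 <= n)%nat) (Q lq : C) (hQ : Q <> RtoC 0)
  (hlq : Cexp lq = Q) (alpha beta : KC) :
  euler n lq alpha (beta0 n beta) =
    Cplus (Cminus (Cmult (rk alpha) (degK n beta)) (Cmult (rk beta) (degK n alpha)))
          (Cmult (rk alpha) (rk beta))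
  /\
  euler n lq (beta0 n beta) alpha =
    Cplus (Cminus (Cmult (rk beta) (degK n alpha)) (Cmult (rk alpha) (degK n beta)))
          (Cmult (Cmult (rk alpha) (rk beta))
                 (RtoC (1 / INR (n - 2) - 1))).
Proof.
  assert (Hm : INR (n-2) <> 0%R) by (apply not_0_INR; lia).
  pose proof PI_RGT_0 as Hpi.
  unfold euler, Hpair. split.
  - match goal with |- context [Csum ?f (twisted n)] => rewrite (Csum_zero f (twisted n)) end.
    2:{ intros [j p] Hin. apply twisted_in in Hin as [Hj Hp]; auto. cbv beta iota.
        unfold exp_pi_i_theta, exp_pi_i_rho, Psi. rewrite chi_beta0 by (auto; lia). ring. }
    unfold exp_pi_i_theta, exp_pi_i_rho, Psi, theta_eig. cbv beta iota.
    rewrite !Cexp_i, pi_half, pi_mhalf, rk_beta0, degK_beta0 by auto.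
    unfold Cdiv. rewrite <- RtoC_inv by auto.
    apply injective_projections; simpl; field; lra.
  - match goal with |- context [Csum ?f (twisted n)] => rewrite (Csum_zero f (twisted n)) end.
    2:{ intros [j p] Hin. apply twisted_in in Hin as [Hj Hp]; auto. cbv beta iota.
        unfold Psi. rewrite chi_beta0 by (auto; lia). ring. }
    unfold exp_pi_i_theta, exp_pi_i_rho, Psi, theta_eig. cbv beta iota.
    rewrite !Cexp_i, pi_half, pi_mhalf, rk_beta0, degK_beta0 by auto.
    unfold Cdiv. rewrite <- RtoC_inv by auto.
    apply injective_projections; simpl; field; lra.
Qed.
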